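(* Let $a,b\in\mathbb{C}$ with $(a,b)\neq(1,0)$ and $\alpha,\beta,\eta\in\mathbb{C}$ with $\alpha\neq0$. A nontrivial extension $0\to M_{\alpha,\beta}\to E\to\mathbb{C}c_\eta\to0$ of $\mathcal{W}(a,b)$-modules exists if and only if $\beta+\eta=0$ and $\alpha=1$. In this case $\dim\mathrm{Ext}(\mathbb{C}c_{-\beta},M_{1,\beta})=1$, and every nontrivial extension is equivalent to $E=\mathbb{C}[\partial]v\oplus\mathbb{C}c_\eta$ with $$L_\lambda c_\eta=kv,\qquad W_\lambda c_\eta=0,\qquad \partial c_\eta=\eta c_\eta+kv$$ for some nonzero $k\in\mathbb{C}$.
   Context: A conformal module over a Lie conformal algebra $\mathcal{R}$ is a $\mathbb{C}[\partial]$-module $V$ with $\mathbb{C}$-linear maps $\mathcal{R}\otimes V\to V[\lambda]$, $a\otimes v\mapsto a_\lambda v$, such that $(\partial a)_\lambda v=-\lambda a_\lambda v$, $a_\lambda(\partial v)=(\partial+\lambda)a_\lambda v$, and $a_\lambda(b_\mu v)-b_\mu(a_\lambda v)=[a_\lambda b]_{\lambda+\mu}v$. The Lie conformal algebra $\mathcal{W}(a,b)$ is the free $\mathbb{C}[\partial]$-module on $L,W$ with $[L_\lambda L]=(\partial+2\lambda)L$, $[L_\lambda W]=(\partial+a\lambda+b)W$, $[W_\lambda W]=0$. For $(a,b)\neq(1,0)$, $\alpha\neq0$, $M_{\alpha,\beta}=\mathbb{C}[\partial]v$ with $L_\lambda v=(\partial+\alpha\lambda+\beta)v$, $W_\lambda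 v=0$. $\mathbb{C}c_\eta$ is the one-dimensional module with $\partial c_\eta=\eta c_\eta$ and all $\lambda$-actions zero. An extension is an exact sequence of modules $0\to V\to E\to W\to 0$; equivalence means a module homomorphism between the middle terms compatible with the identities on $V$ and $W$; trivial means equivalent to the direct sum extension. $\mathrm{Ext}(W,V)$ denotes the vector space of equivalence classes of extensions of $W$ by $V$ (cocycles modulo coboundaries). *)

(* Defs.v *)
From HB Require Import structures.
From mathcomp Require Import all_boot all_order all_algebra.
Set Implicit Arguments. Unset Strict Implicit. Unset Printing Implicit Defensive.
Import Order.TTheory GRing.Theory Num.Theory.
Local Open Scope ring_scope.

(* Conformal modules over the Lie conformal algebra W(a,b) (free C[d]-module
   on L, W).  A module structure on an F-vector space V is given by the
   operator d (= partial) and the lambda-actions of the generators L and W,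
   l |-> L_l v, l |-> W_l v, which must be polynomial in l (elements of V[l]).
   Polynomial identities in lambda, mu are imposed pointwise (F is infinite). *)

Record wdata (F : fieldType) (V : lmodType F) := WData {
  wd : V -> V;
  wL : F -> V -> V;
  wW : F -> V -> V }.

Definition is_lin (F : fieldType) (V U : lmodType F) (f : V -> U) : Prop :=
  forall (k : F) (u v : V), f (k *: u + v) = k *: f u + f v.

(* f : F -> V is (the evaluation map of) an element of V[lambda] *)
Definition is_polyfun (F : fieldType) (V : lmodType F) (f : F -> V) : Prop :=
  exists s : seq V, forall l : F, f l = \sum_(i < size s) (l ^+ i) *: s`_i.

(* Module axioms.  For the generators:
   [L_l L] = (d + 2l) L,  [L_l W] = (d + a l + b) W,  [W_l W] = 0,
   and, with (d x)_l = - l x_l, the Jacobi-type axiom evaluated at l+mu. *)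
Definition is_wmod (F : fieldType) (a b : F) (V : lmodType F) (m : wdata V) : Prop :=
  is_lin (wd m) /\
  (forall l, is_lin (wL m l)) /\ (forall l, is_lin (wW m l)) /\
  (forall v, is_polyfun (fun l => wL m l v)) /\
  (forall v, is_polyfun (fun l => wW m l v)) /\
  (forall l v, wL m l (wd m v) = wd m (wL m l v) + l *: wL m l v) /\
  (forall l v, wW m l (wd m v) = wd m (wW m l v) + l *: wW m l v) /\
  (forall l mu v, wL m l (wL m mu v) - wL m mu (wL m l v)
                  = (l - mu) *: wL m (l + mu) v) /\
  (forall l mu v, wL m l (wW m mu v) - wW m mu (wL m l v)
                  = (a * l + b - (l + mu)) *: wW m (l + mu) v) /\
  (forall l mu v, wW m l (wL m mu v) - wL m mu (wW m l v)
                  = ((l + mu) - a * mu - b) *: wW m (l + mu) v) /\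
  (forall l mu v, wW m l (wW m mu v) - wW m mu (wW m l v) = 0).

Definition is_hom (F : fieldType) (V U : lmodType F) (mV : wdata V) (mU : wdata U)
  (f : V -> U) : Prop :=
  is_lin f /\
  (forall v, f (wd mV v) = wd mU (f v)) /\
  (forall l v, f (wL mV l v) = wL mU l (f v)) /\
  (forall l v, f (wW mV l v) = wW mU l (f v)).

Definition is_ext (F : fieldType) (a b : F) (V W : lmodType F)
  (mV : wdata V) (mW : wdata W) (E : lmodType F) (mE : wdata E)
  (i : V -> E) (p : E -> W) : Prop :=
  is_wmod a b mE /\ is_hom mV mE i /\ is_hom mE mW p /\
  injective i /\ (forall w, exists e, p e = w) /\
  (forall e, p e = 0 <-> exists v, e = i v).

Record ext (F : fieldType) (a b : F) (V W : lmodType F)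
  (mV : wdata V) (mW : wdata W) := Ext {
  ext_E : lmodType F;
  ext_m : wdata ext_E;
  ext_i : V -> ext_E;
  ext_p : ext_E -> W;
  ext_ok : is_ext a b mV mW ext_m ext_i ext_p }.
Arguments ext_E {F a b V W mV mW} _.
Arguments ext_m {F a b V W mV mW} _.
Arguments ext_i {F a b V W mV mW} _.
Arguments ext_p {F a b V W mV mW} _.

Definition ext_equiv_to (F : fieldType) (a b : F) (V W : lmodType F)
  (mV : wdata V) (mW : wdata W) (X : ext a b mV mW)
  (E' : lmodType F) (mE' : wdata E') (i' : V -> E') (p' : E' -> W) : Prop :=
  exists phi : ext_E X -> E',
    is_hom (ext_m X) mE' phi /\
    (forall v, phi (ext_i X v) = i' v) /\
    (forall e, p' (phi e) = ext_p X e).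

Definition dsum (F : fieldType) (V W : lmodType F) (mV : wdata V) (mW : wdata W)
  : wdata (V * W)%type :=
  WData (fun x => (wd mV x.1, wd mW x.2))
        (fun l x => (wL mV l x.1, wL mW l x.2))
        (fun l x => (wW mV l x.1, wW mW l x.2)).

Definition ext_trivial (F : fieldType) (a b : F) (V W : lmodType F)
  (mV : wdata V) (mW : wdata W) (X : ext a b mV mW) : Prop :=
  ext_equiv_to X (dsum mV mW) (fun v => (v, 0)) (fun x => x.2).

(* Ext(W,V) as cocycles modulo coboundaries. *)
Definition twist (F : fieldType) (V W : lmodType F) (mV : wdata V) (mW : wdata W)
  (cd : W -> V) (cL cW : F -> W -> V) : wdata (V * W)%type :=
  WData (fun x => (wd mV x.1 + cd x.2, wd mW x.2))
        (fun l x => (wL mV l x.1 + cL l x.2, wL mW l x.2))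
        (fun l x => (wW mV l x.1 + cW l x.2, wW mW l x.2)).

Definition is_cocycle (F : fieldType) (a b : F) (V W : lmodType F)
  (mV : wdata V) (mW : wdata W) (cd : W -> V) (cL cW : F -> W -> V) : Prop :=
  is_wmod a b (twist mV mW cd cL cW).

Definition is_coboundary (F : fieldType) (V W : lmodType F)
  (mV : wdata V) (mW : wdata W) (cd : W -> V) (cL cW : F -> W -> V) : Prop :=
  exists phi : W -> V, is_lin phi /\
    (forall w, cd w = wd mV (phi w) - phi (wd mW w)) /\
    (forall l w, cL l w = wL mV l (phi w) - phi (wL mW l w)) /\
    (forall l w, cW l w = wW mV l (phi w) - phi (wW mW l w)).

(* dim Ext(W,V) = 1 : the quotient (cocycles)/(coboundaries) is one-dimensional *)
Definition Ext_dim1 (F : fieldType) (a b : F) (V W : lmodType F)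
  (mV : wdata V) (mW : wdata W) : Prop :=
  exists cd0 cL0 cW0,
    is_cocycle a b mV mW cd0 cL0 cW0 /\ ~ is_coboundary mV mW cd0 cL0 cW0 /\
    forall cd cL cW, is_cocycle a b mV mW cd cL cW ->
      exists k : F, is_coboundary mV mW (fun w => cd w - k *: cd0 w)
                     (fun l w => cL l w - k *: cL0 l w)
                     (fun l w => cW l w - k *: cW0 l w).

(* M_{alpha,beta} = F[d] v, realised on {poly F} (p(d) v <-> p):
   d acts by 'X, L_l (p(d) v) = p(d + l) (d + alpha l + beta) v, W_l = 0. *)
Definition Mmod (F : fieldType) (alpha beta : F) : wdata {poly F} :=
  WData (fun p => 'X * p)
        (fun l p => (p \Po ('X + l%:P)) * ('X + (alpha * l + beta)%:P))
        (fun _ _ => 0).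

(* C c_eta, realised on F (x <-> x c_eta): d acts by eta, all lambda-actions 0 *)
Definition Cmod (F : fieldType) (eta : F) : wdata F^o :=
  WData (fun x : F^o => (eta * x : F) : F^o) (fun _ _ => 0) (fun _ _ => 0).

(* The extension E_k = F[d] v (+) F c_eta with
   L_l c_eta = k v, W_l c_eta = 0, d c_eta = eta c_eta + k v,
   realised on {poly F} * F, with v <-> (1,0), c_eta <-> (0,1). *)
Definition Ekmod (F : fieldType) (alpha beta eta k : F) : wdata ({poly F} * F^o)%type :=
  WData (fun x : ({poly F} * F^o)%type => ('X * x.1 + (k * (x.2 : F))%:P, (eta * x.2 : F) : F^o))
        (fun l (x : ({poly F} * F^o)%type) => (wL (Mmod alpha beta) l x.1 + (k * (x.2 : F))%:P, 0))
        (fun _ _ => 0).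

Definition Ek_i (F : fieldType) (p : {poly F}) : ({poly F} * F^o)%type := (p, 0).
Definition Ek_p (F : fieldType) (x : ({poly F} * F^o)%type) : F^o := x.2.

(* Main.v *)
Require Import Defs.
From HB Require Import structures.
From mathcomp Require Import all_boot all_order all_algebra.
From mathcomp Require Import ring.
From Stdlib Require Import FunctionalExtensionality.
Import Order.TTheory GRing.Theory Num.Theory.
Local Open Scope ring_scope.
Set Implicit Arguments. Unset Strict Implicit.

Section PF.
Variable F : fieldType.

Lemma pf_of (V : lmodType F) (f : F -> V) (n : nat) (c : nat -> V) :
  (forall l, f l = \sum_(i < n) l ^+ i *: c i) -> is_polyfun f.
Proof.
move=> H; exists (mkseq c n) => l; rewrite size_mkseq H.
by apply: eq_bigr => i _; rewrite nth_mkseq.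
Qed.

Lemma pf_inv (V : lmodType F) (f : F -> V) : is_polyfun f ->
  exists n (c : nat -> V), forall l, f l = \sum_(i < n) l ^+ i *: c i.
Proof. by case=> s H; exists (size s), (fun i => s`_i). Qed.

Lemma pf_widen (V : lmodType F) n m (c : nat -> V) (H : (n <= m)%N) l :
  \sum_(i < n) l ^+ i *: c i = \sum_(i < m) l ^+ i *: (if (i < n)%N then c i else 0).
Proof.
rewrite (big_ord_widen m (fun i => l ^+ i *: c i) H) big_mkcond.
by apply: eq_bigr => i _; case: ifP => _; rewrite ?scaler0.
Qed.

Lemma pf_ext (V : lmodType F) (f g : F -> V) :
  (forall l, f l = g l) -> is_polyfun f -> is_polyfun g.
Proof. by move=> e [s H]; exists s => l; rewrite -e H. Qed.

Lemma pf_const (V : lmodType F) (v : V) : is_polyfun (fun _ => v).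
Proof. by apply: (@pf_of _ _ 1 (fun _ => v)) => l; rewrite big_ord1 expr0 scale1r. Qed.

Lemma pf_add (V : lmodType F) (f g : F -> V) :
  is_polyfun f -> is_polyfun g -> is_polyfun (fun l => f l + g l).
Proof.
move=> /pf_inv [n [c Hc]] /pf_inv [m [d Hd]].
apply: (@pf_of _ _ (maxn n m)
  (fun i => (if (i < n)%N then c i else 0) + (if (i < m)%N then d i else 0))) => l.
rewrite Hc Hd (@pf_widen V n _ c (leq_maxl n m)) (@pf_widen V m _ d (leq_maxr n m)) -big_split.
by apply: eq_bigr => i _; rewrite scalerDr.
Qed.

Lemma pf_shift (V : lmodType F) (f : F -> V) :
  is_polyfun f -> is_polyfun (fun l => l *: f l).
Proof.
move=> /pf_inv [n [c Hc]].
apply: (@pf_of _ _ n.+1 (fun i => if i is j.+1 then c j else 0)) => l.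
rewrite big_ord_recl scaler0 add0r Hc scaler_sumr.
by apply: eq_bigr => i _; rewrite scalerA exprS.
Qed.

Lemma pf_map (V U : lmodType F) (phi : V -> U) (f : F -> V) :
  (forall u v, phi (u + v) = phi u + phi v) -> (forall k u, phi (k *: u) = k *: phi u) ->
  is_polyfun f -> is_polyfun (fun l => phi (f l)).
Proof.
move=> hD hZ /pf_inv [n [c Hc]].
have h0 : phi 0 = 0.
  by have := hZ 0 0; rewrite !scale0r.
apply: (@pf_of _ _ n (fun i => phi (c i))) => l.
rewrite Hc (big_morph phi hD h0).
by apply: eq_bigr => i _; rewrite hZ.
Qed.

Lemma pf_comp (p : {poly F}) : is_polyfun (fun l => p \Po ('X + l%:P)).
Proof.
elim/poly_ind: p => [|p c IH].
  by apply: (pf_ext _ (pf_const 0)) => l; rewrite comp_poly0.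
have e : forall l, (p * 'X + c%:P) \Po ('X + l%:P)
   = ((p \Po ('X + l%:P)) * 'X + l *: (p \Po ('X + l%:P))) + c%:P.
  move=> l; rewrite comp_polyD comp_polyM comp_polyX comp_polyC -mul_polyC; ring.
apply: (pf_ext (fun l => esym (e l))).
apply: pf_add (pf_const _).
apply: pf_add (pf_shift IH).
by apply: (pf_map (phi := fun u => u * 'X)) IH => [u v|k u]; rewrite ?mulrDl ?scalerAl.
Qed.

Lemma pf_M (alpha beta : F) (p : {poly F}) : is_polyfun (fun l => wL (Mmod alpha beta) l p).
Proof.
have e : forall l, wL (Mmod alpha beta) l p =
   (p \Po ('X + l%:P)) * ('X + beta%:P) + l *: (alpha *: (p \Po ('X + l%:P))).
  move=> l; rewrite /= -!mul_polyC polyCD polyCM; ring.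
apply: (pf_ext (fun l => esym (e l))).
apply: pf_add (pf_shift _).
  by apply: (pf_map (phi := fun u => u * ('X + beta%:P))) (pf_comp p) => [u v|k u];
    rewrite ?mulrDl ?scalerAl.
by apply: (pf_map (phi := fun u => alpha *: u)) (pf_comp p) => [u v|k u];
    rewrite ?scalerDr ?scalerA // mulrC.
Qed.

End PF.


Section B.
Variable F : fieldType.
Implicit Types (u v : {poly F}) (x y : F^o).

Lemma pZ s u x : s *: ((u, x) : {poly F} * F^o) = (s *: u, s *: x). Proof. by []. Qed.
Lemma pD u v x y : ((u, x) : {poly F} * F^o) + (v, y) = (u + v, x + y). Proof. by []. Qed.
Lemma pN u x : - ((u, x) : {poly F} * F^o) = (- u, - x). Proof. by []. Qed.
Lemma p0 : (0 : {poly F} * F^o) = (0, 0). Proof. by []. Qed.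
Lemma sO s x : s *: x = (s * x : F). Proof. by []. Qed.

Lemma Mcomp (p : {poly F}) (c d : F) :
  (p \Po ('X + c%:P)) \Po ('X + d%:P) = p \Po ('X + (c + d)%:P).
Proof. rewrite -comp_polyA comp_polyD comp_polyX comp_polyC polyCD; congr (_ \Po _); ring. Qed.

Ltac pe := rewrite ?pN ?pZ ?pD ?p0 ?sO /=; congr (_, _).
Ltac pc := rewrite -?mul_polyC ?(polyCD, polyCM, polyCN, polyCB, comp_polyD, comp_polyM, comp_polyZ, comp_polyX, comp_polyC, comp_poly0).

Lemma Ek_wmod (a b beta k : F) : is_wmod a b (Ekmod 1 beta (- beta) k).
Proof.
rewrite /is_wmod /=.
split; [|split; [|split; [|split; [|split; [|split; [|split; [|split; [|split; [|split]]]]]]]]].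
- move=> s [p y] [q z] /=; pe.
    pc; ring.
  change ((-beta) * (s * y + z) = s * ((-beta) * y) + (-beta) * z); ring.
- move=> l s [p y] [q z] /=; pe; last by rewrite mulr0 addr0.
  pc; ring.
- by move=> l s [p y] [q z] /=; rewrite scaler0 addr0.
- move=> [p y].
  have e : forall l, ((wL (Mmod 1 beta) l p, 0) : {poly F} * F^o) + ((k * y)%:P, 0)
     = ((p \Po ('X + l%:P)) * ('X + (1 * l + beta)%:P) + (k * y)%:P, 0).
    by move=> l; rewrite pD addr0.
  apply: (pf_ext e).
  apply: (pf_add (f := fun l => ((wL (Mmod 1 beta) l p, 0) : {poly F} * F^o))
                 (g := fun _ => ((k * y)%:P, 0))); last exact: pf_const.
  apply: (pf_map (phi := fun u : {poly F} => ((u, 0) : {poly F} * F^o))) (pf_M _ _ _).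
    by move=> u v; rewrite pD addr0.
  by move=> s u; rewrite pZ scaler0.
- by move=> _; apply: pf_const.
- move=> l [p y] /=; pe.
    rewrite comp_polyD comp_polyM; set P := p \Po _; pc; ring.
  by rewrite !mulr0 addr0.
- by move=> l _; pe; rewrite ?mulr0 ?scaler0 ?addr0.
- move=> l mu [p y] /=.
  rewrite !comp_polyD !comp_polyM !Mcomp [mu + l]addrC; set P := p \Po _.
  pe; last by rewrite ?sO; ring.
  pc; ring.
- by move=> l mu _; pe; rewrite ?comp_poly0 ?mul0r ?mulr0 ?scaler0 ?add0r ?subr0 ?oppr0 ?mulr0.
- by move=> l mu _; pe; rewrite ?comp_poly0 ?mul0r ?mulr0 ?scaler0 ?add0r ?subr0 ?oppr0 ?mulr0.
- by move=> l mu _; rewrite subr0.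
Qed.
End B.


Section L.
Variable F : fieldType.
Variables (V U : lmodType F) (f : V -> U) (h : is_lin f).
Lemma lin0 : f 0 = 0.
Proof.
have e := h 1 0 0; rewrite !scale1r !addr0 in e.
by apply: (addrI (f 0)); rewrite addr0 -e.
Qed.
Lemma linD u v : f (u + v) = f u + f v.
Proof. by have := h 1 u v; rewrite !scale1r. Qed.
Lemma linZ k u : f (k *: u) = k *: f u.
Proof. by have := h k u 0; rewrite !addr0 lin0 addr0. Qed.
Lemma linN u : f (- u) = - f u.
Proof. by rewrite -scaleN1r linZ scaleN1r. Qed.
Lemma linB u v : f (u - v) = f u - f v.
Proof. by rewrite linD linN. Qed.
End L.

Section Ext.
Variable F : fieldType.
Variables (a b alpha beta eta : F) (E : lmodType F) (m : wdata E)
  (i : {poly F} -> E) (p : E -> F^o).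
Hypothesis H : is_ext a b (Mmod alpha beta) (Cmod eta) m i p.

Lemma Hi : is_hom (Mmod alpha beta) m i. Proof. by case: H => _ []. Qed.
Lemma Hp : is_hom m (Cmod eta) p. Proof. by case: H => _ [] _ []. Qed.
Lemma Hm : is_wmod a b m. Proof. by case: H. Qed.
Lemma Hinj : injective i. Proof. by case: H => _ [] _ [] _ []. Qed.
Lemma Hsurj : forall w, exists e, p e = w. Proof. by case: H => _ [] _ [] _ [] _ []. Qed.
Lemma Hex : forall e, p e = 0 <-> exists v, e = i v.
Proof. by case: H => _ [] _ [] _ [] _ []. Qed.

Lemma pi0 v : p (i v) = 0. Proof. by apply/Hex; exists v. Qed.

Lemma ker_pre e : p e = 0 -> exists v, i v == e.
Proof. by move/Hex => [v ->]; exists v. Qed.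

Lemma section (c : E) : p c = 1 -> exists r : E -> {poly F},
  is_lin r /\ forall e, i (r e) = e - (p e : F) *: c.
Proof.
move=> pc.
have pk : forall e, p (e - (p e : F) *: c) = 0.
  move=> e; case: Hp => lp _.
  by rewrite (linB lp) (linZ lp) pc /= [_ *: _]mulr1 subrr.
exists (fun e => xchoose (ker_pre (pk e))).
have rs : forall e, i (xchoose (ker_pre (pk e))) = e - (p e : F) *: c.
  by move=> e; apply/eqP; apply: (xchooseP (ker_pre (pk e))).
split=> //.
move=> k u v; apply: Hinj.
case: Hi => li _; case: Hp => lp _.
rewrite (linD li) (linZ li) !rs (linD lp) (linZ lp).
by rewrite scalerDl -scalerA scalerBr opprD addrACA.
Qed.
End Ext.

Lemma Xc_neq0 (F : fieldType) (c : F) : 'X + c%:P != 0.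
Proof. by rewrite -size_poly_eq0 size_XaddC. Qed.

Section Ext2.
Variable F : fieldType.
Variables (a b alpha beta eta : F) (E : lmodType F) (m : wdata E)
  (i : {poly F} -> E) (p : E -> F^o).
Hypothesis H : is_ext a b (Mmod alpha beta) (Cmod eta) m i p.

Lemma analysis : exists (c : E) (f0 : F) (g : F -> {poly F}),
  p c = 1 /\ wd m c = eta *: c + i f0%:P /\ (forall l, wL m l c = i (g l)) /\
  (forall l, wW m l c = 0) /\
  (forall l, ('X + (l - eta)%:P) * g l = f0 *: ('X + (alpha * l + beta)%:P)).
Proof.
case: (Hi H) => li [hid [hiL hiW]]; case: (Hp H) => lp [pd [pL pW]].
have [lm [lL [lW [_ [_ [dL [dW _]]]]]]] := Hm H.
have [c0 pc0] := Hsurj H 1.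
have : p (wd m c0 - eta *: c0) = 0.
  by rewrite (linB lp) (linZ lp) pd pc0 /= sO subrr.
move=> /(Hex H) [f hf].
set f0 := f.[eta].
have : root (f - f0%:P) eta by rewrite /root !hornerE subrr.
move=> /factor_theorem [q hq].
have hf2 : f = f0%:P + 'X * q - eta *: q.
  by rewrite -[f](subrK f0%:P) hq -mul_polyC; ring.
exists (c0 - i q), f0.
have pc : p (c0 - i q) = 1 by rewrite (linB lp) (pi0 H) pc0 subr0.
have dc : wd m (c0 - i q) = eta *: (c0 - i q) + i f0%:P.
  have e0 : wd m c0 = eta *: c0 + i f by rewrite -hf addrC subrK.
  rewrite (linB lm) -hid e0 scalerBr -(linZ li) -!addrA; congr (_ + _).
  rewrite [RHS]addrC -(linB li) -(linB li); congr (i _).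
  by rewrite hf2 /= -!mul_polyC; ring.
move: pc dc; set c := c0 - i q => pc dc; clearbody c.
have gex : forall l, exists v, i v == wL m l c.
  by move=> l; apply: (ker_pre H); rewrite pL.
have hex : forall l, exists v, i v == wW m l c.
  by move=> l; apply: (ker_pre H); rewrite pW.
exists (fun l => xchoose (gex l)).
have hg : forall l, wL m l c = i (xchoose (gex l)).
  by move=> l; rewrite (eqP (xchooseP (gex l))).
split=> //; split=> //; split=> //; split.
- move=> l; set h := xchoose (hex l).
  have hh : wW m l c = i h by rewrite (eqP (xchooseP (hex l))).
  have := dW l c.
  rewrite dc (linD (lW l)) (linZ (lW l)).
  rewrite hh -hiW /= (lin0 li) addr0.
  rewrite -hid -!(linZ li) -(linD li) => e0; have /= e := Hinj H e0.
  have e2 : ('X + (l - eta)%:P) * h = ('X * h + l *: h) - eta *: h.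
    by rewrite -!mul_polyC polyCB; ring.
  rewrite -e subrr in e2.
  move: e2 => /eqP; rewrite mulf_eq0 (negbTE (Xc_neq0 _)) /= => /eqP h0.
  by rewrite h0 (lin0 li).
- move=> l; have hgl := hg l; move: hgl; set g := xchoose (gex l) => hgl.
  clearbody g.
  have := dL l c.
  rewrite dc (linD (lL l)) (linZ (lL l)) hgl -hiL -hid -!(linZ li) -!(linD li).
  move=> e0; have /= e := Hinj H e0.
  rewrite comp_polyC in e.
  have e2 : ('X + (l - eta)%:P) * g = ('X * g + l *: g) - eta *: g.
    by rewrite -!mul_polyC polyCB; ring.
  by rewrite e2 -e addrC addKr mul_polyC.
Qed.

Lemma to_target (c : E) (f0 : F) (mT : wdata ({poly F} * F^o)%type) :
  p c = 1 -> wd m c = eta *: c + i f0%:P -> (forall l, wL m l c = i (f0%:P)) ->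
  (forall l, wW m l c = 0) ->
  (forall x, wd mT x = ('X * x.1 + (f0 * x.2)%:P, eta * x.2)) ->
  (forall l x, wL mT l x = (wL (Mmod alpha beta) l x.1 + (f0 * x.2)%:P, 0)) ->
  (forall l x, wW mT l x = 0) ->
  exists phi : E -> ({poly F} * F^o)%type,
    is_hom m mT phi /\ (forall v, phi (i v) = (v, 0)) /\ (forall e, (phi e).2 = p e).
Proof.
move=> pc dc hL hW tD tL tW.
case: (Hi H) => li [hid [hiL hiW]]; case: (Hp H) => lp [pd [pL pW]].
have [lm [lL [lW _]]] := Hm H.
have [r [lr rs]] := section H pc.
have ee : forall e, e = i (r e) + (p e : F) *: c by move=> e; rewrite rs subrK.
have fc : forall x : F, i (f0 * x)%:P = x *: i f0%:P.
  by move=> x; rewrite -(linZ li) -mul_polyC -polyCM mulrC.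
exists (fun e => (r e, p e)); split; [split; [|split; [|split]]|split] => //.
- by move=> k u v; rewrite pZ pD (lr k u v) (linD lp) (linZ lp).
- move=> e; rewrite tD /=; congr (_, _); last by rewrite pd.
  apply: (Hinj H); rewrite rs pd (linD li) fc hid rs (linB lm) (linZ lm) dc.
  rewrite scalerDr opprD addrA subrK /=.
  by rewrite [in RHS]scalerA mulrC.
- move=> l e; rewrite tL /=; congr (_, _); last by rewrite pL.
  apply: (Hinj H); rewrite rs pL (linD li) fc hiL rs (linB (lL l)) (linZ (lL l)) hL.
  by rewrite subrK /= scale0r subr0.
- move=> l e; rewrite tW p0; congr (_, _); last by rewrite pW.
  apply: (Hinj H); rewrite rs pW /= scale0r subr0 (lin0 li).
  by rewrite {1}(ee e) (linD (lW l)) (linZ (lW l)) hW -hiW /= (lin0 li) scaler0 addr0.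
- move=> v /=; congr (_, _); last by rewrite (pi0 H).
  by apply: (Hinj H); rewrite rs (pi0 H) scale0r subr0.
Qed.
End Ext2.


Lemma eta_eq (F : fieldType) (beta eta : F) : beta + eta = 0 -> eta = - beta.
Proof. by move=> h; apply/eqP; rewrite -addr_eq0 addrC h. Qed.

Lemma Ek_ext (F : fieldType) (a b alpha beta eta k : F) : alpha = 1 -> beta + eta = 0 ->
  is_ext a b (Mmod alpha beta) (Cmod eta) (Ekmod alpha beta eta k) (@Ek_i F) (@Ek_p F).
Proof.
move=> -> /eta_eq ->.
split; first exact: Ek_wmod.
split; first (split; [|split; [|split]]).
- by move=> s u v; rewrite /Ek_i pZ pD scaler0 addr0.
- by move=> v; rewrite /Ek_i /=; rewrite !mulr0 addr0.
- by move=> l v; rewrite /Ek_i /=; rewrite !mulr0 addr0.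
- by move=> l v.
split; first (split; [|split; [|split]]) => //.
split; first by move=> u v [].
split; first by move=> w; exists (0, w).
move=> [u x]; rewrite /Ek_p /=; split.
  by move=> ->; exists u.
by case=> v [].
Qed.

Lemma Ek_nontriv (F : fieldType) (a b alpha beta eta k : F)
  (hE : is_ext a b (Mmod alpha beta) (Cmod eta) (Ekmod alpha beta eta k) (@Ek_i F) (@Ek_p F)) :
  k != 0 -> ~ ext_trivial (Ext hE).
Proof.
move=> k0 [phi [[lphi [hd _]] [hi hp]]] /=.
move: hd hi hp; rewrite /Ek_i /Ek_p /= => hd hi hp.
case e01 : (phi (0, 1)) => [q t].
have t1 : t = 1 by have := hp (0, 1); rewrite e01.
have := hd (0, 1).
have -> : (('X * 0 + (k * 1)%:P, eta * 1) : {poly F} * F^o)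
   = (k%:P, 0) + eta *: (0, 1).
  rewrite pZ pD; congr (_, _); [by rewrite mulr0 add0r mulr1 scaler0 addr0 | by rewrite sO add0r].
rewrite (linD lphi) (linZ lphi) hi e01 t1 pZ pD /= => [[e1 _]].
have := congr1 (horner^~ eta) e1.
rewrite !hornerE => e2; move/eqP: k0; apply; apply: (addIr (eta * q.[eta])); by rewrite add0r.
Qed.


Lemma g_const (F : fieldType) (alpha beta eta f0 l : F) (g : {poly F}) :
  alpha = 1 -> beta + eta = 0 ->
  ('X + (l - eta)%:P) * g = f0 *: ('X + (alpha * l + beta)%:P) -> g = f0%:P.
Proof.
move=> -> /eta_eq -> e; apply: (mulfI (Xc_neq0 (l + beta))).
by rewrite opprK mul1r in e; rewrite e -mul_polyC mulrC.
Qed.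

Lemma f0_cond (F : fieldType) (alpha beta eta f0 : F) (g : F -> {poly F}) :
  f0 != 0 ->
  (forall l, ('X + (l - eta)%:P) * g l = f0 *: ('X + (alpha * l + beta)%:P)) ->
  beta + eta = 0 /\ alpha = 1.
Proof.
move=> f0n hg.
have h : forall l, eta - l + (alpha * l + beta) = 0.
  move=> l; have := congr1 (horner^~ (eta - l)) (hg l).
  rewrite -mul_polyC !(hornerM, hornerD, hornerX, hornerC).
  have -> : eta - l + (l - eta) = 0 by ring.
  by rewrite mul0r => /esym /eqP; rewrite mulf_eq0 (negbTE f0n) /= => /eqP.
have e0 : beta + eta = 0.
  by have := h 0; rewrite subr0 mulr0 add0r addrC.
split=> //; apply/eqP; rewrite -subr_eq0; apply/eqP.
have -> : alpha - 1 = (eta - 1 + (alpha * 1 + beta)) - (beta + eta) by ring.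
by rewrite h e0 subr0.
Qed.

Section X.
Variable F : fieldType.
Variables (a b alpha beta eta : F).

Lemma triv_or_k (X : ext a b (Mmod alpha beta) (Cmod eta)) :
  ext_trivial X \/
  (exists k : F, k != 0 /\ beta + eta = 0 /\ alpha = 1 /\
     ext_equiv_to X (Ekmod alpha beta eta k) (@Ek_i F) (@Ek_p F)).
Proof.
case: X => E m i p hE; rewrite /ext_trivial /ext_equiv_to /=.
have [c [f0 [g [pc [dc [hg [hw hid]]]]]]] := analysis hE.
case: (eqVneq f0 0) => [f00|f0n].
  subst f0.
  left.
  have g0 : forall l, g l = 0.
    move=> l; have := hid l; rewrite scale0r => /eqP.
    by rewrite mulf_eq0 (negbTE (Xc_neq0 _)) => /eqP.
  apply: (to_target hE pc dc) => //.
  - by move=> l; rewrite hg g0.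
  - by move=> x; rewrite /= mul0r addr0.
  - by move=> l x; rewrite /= mul0r addr0.
right; have [e0 a1] := f0_cond f0n hid.
exists f0; do 3 split => //.
apply: (to_target hE pc dc) => //.
by move=> l; rewrite hg (g_const a1 e0 (hid l)).
Qed.
End X.

Lemma twist_Ek (F : fieldType) (beta : F) :
  twist (Mmod 1 beta) (Cmod (- beta)) (fun w : F^o => (1 * w)%:P)
        (fun _ (w : F^o) => (1 * w)%:P) (fun _ _ => 0)
  = Ekmod 1 beta (- beta) 1.
Proof.
rewrite /twist /Ekmod /=; congr WData.
apply: functional_extensionality => l; apply: functional_extensionality => x.
by rewrite p0 addr0.
Qed.

Lemma Ext1 (F : fieldType) (a b beta : F) : Ext_dim1 a b (Mmod 1 beta) (Cmod (- beta)).
Proof.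
exists (fun w : F^o => (1 * w)%:P), (fun _ (w : F^o) => (1 * w)%:P), (fun _ _ => 0).
split; first by rewrite /is_cocycle twist_Ek; apply: Ek_wmod.
split.
  move=> [phi [lphi [hd _]]].
  have := hd 1; rewrite /=.
  have -> : phi (- beta * 1) = - beta *: phi 1 by exact: (linZ lphi (- beta) (1 : F^o)).
  move=> /(congr1 (horner^~ (- beta))).
  rewrite !(hornerM, hornerD, hornerN, hornerX, hornerC, hornerZ) subrr mulr1.
  by move/eqP; rewrite oner_eq0.
move=> cd cL cW hc.
have [lw [lL [lW _]]] := hc.
have cdZ : forall w : F^o, cd w = w *: cd 1.
  move=> w; have := congr1 fst (linZ lw w ((0, 1) : {poly F} * F^o)).
  by rewrite /= scaler0 mulr0 !add0r sO mulr1.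
have cLZ : forall l (w : F^o), cL l w = w *: cL l 1.
  move=> l w; have := congr1 fst (linZ (lL l) w ((0, 1) : {poly F} * F^o)).
  by rewrite /= scaler0 comp_poly0 mul0r !add0r sO mulr1.
have cWZ : forall l (w : F^o), cW l w = w *: cW l 1.
  move=> l w; have := congr1 fst (linZ (lW l) w ((0, 1) : {poly F} * F^o)).
  by rewrite /= !add0r sO mulr1.
have hE : is_ext a b (Mmod 1 beta) (Cmod (- beta))
    (twist (Mmod 1 beta) (Cmod (- beta)) cd cL cW) (fun v => (v, 0)) (fun x => x.2).
  split; first exact: hc.
  split; first (split; [|split; [|split]]).
  - by move=> s u v; rewrite pZ pD scaler0 addr0.
  - by move=> v /=; rewrite cdZ scale0r addr0 mulr0.
  - by move=> l v /=; rewrite cLZ scale0r addr0.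
  - by move=> l v /=; rewrite cWZ scale0r addr0.
  split; first (split; [|split; [|split]]) => //.
  split; first by move=> u v [].
  split; first by move=> w; exists (0, w).
  move=> [u x] /=; split.
    by move=> ->; exists u.
  by case=> v [].
have [[c1 c2] [f0 [g [pc [dc [hg [hw hid]]]]]]] := analysis hE.
have gc : forall l, g l = f0%:P.
  by move=> l; apply: (g_const (alpha := 1) (beta := beta) (eta := - beta)) => //; rewrite subrr.
move: pc dc hg hw => /= -> dc hg hw.
have cd1 : cd 1 = - beta *: c1 + f0%:P - 'X * c1.
  have := congr1 fst dc; rewrite pZ pD /= => <-; rewrite addrC addKr //.
have cL1 : forall l, cL l 1 = f0%:P - (c1 \Po ('X + l%:P)) * ('X + (1 * l + beta)%:P).
  move=> l; have := congr1 fst (hg l); rewrite gc /= => <-; rewrite addrC addKr //.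
have cW1 : forall l, cW l 1 = 0.
  by move=> l; have := congr1 fst (hw l); rewrite /= add0r.
exists f0, (fun w : F^o => (- w) *: c1).
split.
  by move=> s u v; rewrite sO opprD scalerDl scalerA mulrN.
split.
  move=> w /=; rewrite cdZ cd1 -!mul_polyC !(polyCM, polyCN, polyCD); ring.
split.
  move=> l w /=; rewrite cLZ cL1 comp_polyZ oppr0 scale0r subr0.
  set C := c1 \Po _.
  rewrite -!mul_polyC !(polyCM, polyCN, polyCD); ring.
by move=> l w /=; rewrite cWZ cW1 !scaler0 subrr add0r scaleNr opprK scale0r.
Qed.


Unset Implicit Arguments.

Theorem theorem3p5 (F : numClosedFieldType) (a b alpha beta eta : F) :
  (a, b) != (1, 0) -> alpha != 0 ->
  ((exists X : ext a b (Mmod alpha beta) (Cmod eta), ~ ext_trivial X)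
     <-> (beta + eta = 0 /\ alpha = 1)) /\
  (beta + eta = 0 -> alpha = 1 ->
     Ext_dim1 a b (Mmod 1 beta) (Cmod (- beta)) /\
     (forall X : ext a b (Mmod alpha beta) (Cmod eta), ~ ext_trivial X ->
        exists k : F, k != 0 /\
          is_ext a b (Mmod alpha beta) (Cmod eta) (Ekmod alpha beta eta k)
                 (@Ek_i F) (@Ek_p F) /\
          ext_equiv_to X (Ekmod alpha beta eta k) (@Ek_i F) (@Ek_p F))).
Proof.
move=> _ _.
split.
  split.
    case=> X nt; case: (triv_or_k X) => [//|[k [_ [e0 [a1 _]]]]]; by [].
  case=> e0 a1.
  exists (Ext (@Ek_ext F a b alpha beta eta 1 a1 e0)).
  by apply: Ek_nontriv; exact: oner_neq0.
move=> e0 a1; split; first exact: Ext1.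
move=> X nt; case: (triv_or_k X) => [//|[k [k0 [_ [_ heq]]]]].
exists k; split=> //; split=> //.
exact: Ek_ext.
Qed.
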